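(* Let $\Gamma$ be a finite connected $2$-distance-transitive graph of valency $k\ge3$. Then one of the following holds: (1) $\Gamma$ is a distance-transitive strongly regular graph; (2) $\Gamma$ has diameter $d\ge3$ and $b_1\ge\max\{c_2,\frac13(k+1)\}$.
   Context: $\Gamma$ is $2$-distance-transitive if its diameter is at least $2$, $\mathrm{Aut}(\Gamma)$ is vertex-transitive, and $\mathrm{Aut}(\Gamma)_u$ is transitive on $\Gamma(u)$ and $\Gamma_2(u)$ for each $u$. $b_1$ is the number of neighbours of a vertex $w\in\Gamma(u)$ lying at distance $2$ from $u$, and $c_2$ is the number of common neighbours of two vertices at distance $2$. Distance-transitive means $\mathrm{Aut}(\Gamma)$ is transitive on ordered pairs of vertices at distance $i$ for each $i$. *)

(* Defs.v *)
From mathcomp Require Import all_boot all_fingroup.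
Set Implicit Arguments. Unset Strict Implicit. Unset Printing Implicit Defensive.

Definition simple_graph (T : finType) (e : rel T) : Prop :=
  symmetric e /\ irreflexive e.

Fixpoint ball (T : finType) (e : rel T) (n : nat) (x : T) : {set T} :=
  match n with
  | 0 => [set x]
  | n'.+1 => ball e n' x :|: [set z | [exists y in ball e n' x, e y z]]
  end.

(* graph distance: least n with y in ball e n x (for a connected graph this
   is < #|T|; the value #|T|.+1 only occurs for unreachable y). *)
Definition dist (T : finType) (e : rel T) (x y : T) : nat :=
  find (fun n => y \in ball e n x) (iota 0 #|T|.+1).

Definition connected_graph (T : finType) (e : rel T) : Prop :=
  forall x y : T, connect e x y.

Definition diameter (T : finType) (e : rel T) : nat :=
  \max_(x : T) \max_(y : T) dist e x y.

Definition sphere (T : finType) (e : rel T) (i : nat) (u : T) : {set T} :=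
  [set v | dist e u v == i].

Definition Aut (T : finType) (e : rel T) : {set {perm T}} :=
  [set g : {perm T} | [forall x, forall y, e (g x) (g y) == e x y]].

Definition vertex_transitive (T : finType) (e : rel T) : Prop :=
  forall u v : T, exists2 g, g \in Aut e & g u = v.

Definition stab_transitive_on_sphere (T : finType) (e : rel T) (i : nat) : Prop :=
  forall u v w : T, v \in sphere e i u -> w \in sphere e i u ->
    exists2 g, g \in Aut e & (g u = u /\ g v = w).

Definition two_distance_transitive (T : finType) (e : rel T) : Prop :=
  2 <= diameter e /\ vertex_transitive e /\
  stab_transitive_on_sphere e 1 /\ stab_transitive_on_sphere e 2.

Definition distance_transitive (T : finType) (e : rel T) : Prop :=
  forall (i : nat) (u v u' v' : T), dist e u v = i -> dist e u' v' = i ->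
    exists2 g, g \in Aut e & (g u = u' /\ g v = v').

Definition regular_of_valency (T : finType) (e : rel T) (k : nat) : Prop :=
  forall u : T, #|[set v | e u v]| = k.

Definition common_nbrs (T : finType) (e : rel T) (x y : T) : nat :=
  #|[set z | e x z && e y z]|.

Definition strongly_regular (T : finType) (e : rel T) : Prop :=
  exists k lam mu : nat,
    regular_of_valency e k /\
    (forall x y : T, e x y -> common_nbrs e x y = lam) /\
    (forall x y : T, x != y -> ~~ e x y -> common_nbrs e x y = mu).

Definition b1 (T : finType) (e : rel T) (u w : T) : nat :=
  #|[set x | e w x && (dist e u x == 2)]|.

(* Main.v *)
Require Import Defs.
From mathcomp Require Import all_boot all_fingroup.
From mathcomp Require Import zify.
Set Implicit Arguments. Unset Strict Implicit. Unset Printing Implicit Defensive.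

Lemma cardU_le (T : finType) (A B : {set T}) : #|A :|: B| <= #|A| + #|B|.
Proof. by rewrite -cardsUI leq_addr. Qed.

Lemma ballS_in (T : finType) (e : rel T) n x z :
  (z \in ball e n.+1 x) = (z \in ball e n x) || [exists y in ball e n x, e y z].
Proof. by rewrite [ball e n.+1 x]/= !inE. Qed.

Lemma ball0_in (T : finType) (e : rel T) x z : (z \in ball e 0 x) = (z == x).
Proof. by rewrite /= inE. Qed.

Lemma ballS (T : finType) (e : rel T) n x : ball e n x \subset ball e n.+1 x.
Proof. by apply/subsetP => z zb; rewrite ballS_in zb. Qed.

Lemma ball_mono (T : finType) (e : rel T) m n x :
  m <= n -> ball e m x \subset ball e n x.
Proof.
elim: n => [|n IH]; first by rewrite leqn0 => /eqP ->.
rewrite leq_eqVlt => /orP[/eqP -> //| h].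
apply: subset_trans (IH h) _; exact: ballS.
Qed.

Lemma ball_step (T : finType) (e : rel T) n x y z :
  y \in ball e n x -> e y z -> z \in ball e n.+1 x.
Proof.
by move=> yb eyz; rewrite ballS_in; apply/orP; right; apply/existsP; exists y; rewrite yb.
Qed.

Lemma ball1_in (T : finType) (e : rel T) x z :
  (z \in ball e 1 x) = (z == x) || e x z.
Proof.
rewrite ballS_in ball0_in; congr orb; apply/existsP/idP.
  by move=> [y /andP[]]; rewrite ball0_in => /eqP ->.
by move=> h; exists x; rewrite ball0_in eqxx h.
Qed.

Lemma ball_adj (T : finType) (e : rel T) a b n :
  e a b -> ball e n b \subset ball e n.+1 a.
Proof.
move=> eab; elim: n => [|n IH].
  by apply/subsetP => z; rewrite ball0_in => /eqP ->; rewrite ball1_in eab orbT.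
move/subsetP: IH => IH; have S := subsetP (ballS e n.+1 a).
apply/subsetP => z; rewrite ballS_in => /orP[zb | /existsP[y /andP[yb eyz]]].
  exact: S _ (IH _ zb).
exact: ball_step (IH _ yb) eyz.
Qed.

Lemma ball_stab1 (T : finType) (e : rel T) n x :
  ball e n.+1 x = ball e n x -> ball e n.+2 x = ball e n.+1 x.
Proof.
move=> h.
transitivity (ball e n.+1 x :|: [set z | [exists y in ball e n.+1 x, e y z]]) => //.
rewrite h; exact: h.
Qed.

Lemma ball_stab (T : finType) (e : rel T) n x :
  ball e n.+1 x = ball e n x -> forall m, ball e (m + n) x = ball e n x.
Proof.
move=> h.
have h2 : forall m, ball e (m + n).+1 x = ball e (m + n) x.
  by elim=> [//|m IH]; rewrite addSn; apply: ball_stab1.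
by elim=> [//|m IH]; rewrite addSn h2.
Qed.

Lemma path_ball (T : finType) (e : rel T) x p :
  path e x p -> last x p \in ball e (size p) x.
Proof.
elim: p x => [|x1 p IH] x /=; first by rewrite inE.
move=> /andP[ex px]; exact: (subsetP (ball_adj _ ex)) (IH _ px).
Qed.

Lemma conn_ball (T : finType) (e : rel T) x y :
  connect e x y -> y \in ball e #|T| x.
Proof.
move=> /connectP[p pp ->].
case: (shortenP pp) => p' pp' up' _.
apply: (subsetP (ball_mono _ _ _)) (path_ball pp').
have : #|x :: p'| <= #|T| := max_card _.
by rewrite (card_uniqP up') /= => /ltnW.
Qed.


Lemma dist_ball (T : finType) (e : rel T) x y :
  dist e x y <= #|T| -> y \in ball e (dist e x y) x.
Proof.
move=> h.
have hs : has (fun n => y \in ball e n x) (iota 0 #|T|.+1).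
  by rewrite has_find size_iota.
by have := nth_find 0 hs; rewrite nth_iota // -/(dist e x y) ltnS.
Qed.

Lemma dist_min (T : finType) (e : rel T) x y m :
  m < dist e x y -> y \notin ball e m x.
Proof.
move=> h; have := before_find 0 h.
have hs := find_size (fun n => y \in ball e n x) (iota 0 #|T|.+1).
rewrite size_iota in hs.
rewrite nth_iota; last by apply: leq_trans h hs.
by move=> /= ->.
Qed.

Lemma dist_eq (T : finType) (e : rel T) x y n :
  dist e x y <= #|T| -> y \in ball e n x ->
  (forall m, m < n -> y \notin ball e m x) -> dist e x y = n.
Proof.
move=> hd yn hm; case: (ltngtP (dist e x y) n) => // h.
  by have := hm _ h; rewrite dist_ball.
by have := dist_min h; rewrite yn.
Qed.

Lemma distSP (T : finType) (e : rel T) x y n :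
  dist e x y <= #|T| ->
  dist e x y = n.+1 <-> (y \in ball e n.+1 x /\ y \notin ball e n x).
Proof.
move=> hd; split.
  by move=> h; split; [rewrite -h dist_ball | apply: dist_min; rewrite h].
move=> [h1 h2]; apply: dist_eq => // m hm; apply: contra h2.
by apply: (subsetP (ball_mono _ _ _)).
Qed.

Lemma dist0 (T : finType) (e : rel T) x y :
  dist e x y <= #|T| -> dist e x y = 0 -> y = x.
Proof. by move=> hd h; have := dist_ball hd; rewrite h ball0_in => /eqP. Qed.

Lemma autE (T : finType) (e : rel T) (g : {perm T}) x y :
  g \in Defs.Aut e -> e (g x) (g y) = e x y.
Proof. by rewrite inE => /forallP/(_ x)/forallP/(_ y)/eqP. Qed.


Lemma autM (T : finType) (e : rel T) (g h : {perm T}) :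
  g \in Defs.Aut e -> h \in Defs.Aut e -> (g * h)%g \in Defs.Aut e.
Proof.
move=> ga ha; rewrite inE; apply/forallP => x; apply/forallP => y.
by rewrite !permM (autE _ _ ha) (autE _ _ ga).
Qed.

Lemma aut_ball (T : finType) (e : rel T) (g : {perm T}) n x y :
  g \in Defs.Aut e -> (g y \in ball e n (g x)) = (y \in ball e n x).
Proof.
move=> ga; elim: n y => [|n IH] y; first by rewrite !ball0_in (inj_eq (@perm_inj _ g)).
rewrite !ballS_in IH; congr orb; apply/existsP/existsP.
  move=> [y' /andP[yb ey]]; exists ((g^-1)%g y').
  by rewrite -IH -(autE _ _ ga) !permKV yb ey.
move=> [y' /andP[yb ey]]; exists (g y').
by rewrite IH (autE _ _ ga) yb ey.
Qed.

Lemma aut_dist (T : finType) (e : rel T) (g : {perm T}) x y :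
  g \in Defs.Aut e -> dist e (g x) (g y) = dist e x y.
Proof. by move=> ga; rewrite /dist; apply: eq_find => n; exact: aut_ball. Qed.

Lemma aut_cn (T : finType) (e : rel T) (g : {perm T}) x y :
  g \in Defs.Aut e -> common_nbrs e (g x) (g y) = common_nbrs e x y.
Proof.
move=> ga; rewrite /common_nbrs -(card_preimset _ (@perm_inj _ g)).
by apply: eq_card => z; rewrite !inE !(autE _ _ ga).
Qed.

Lemma aut_b1 (T : finType) (e : rel T) (g : {perm T}) x y :
  g \in Defs.Aut e -> b1 e (g x) (g y) = b1 e x y.
Proof.
move=> ga; rewrite /b1 -(card_preimset _ (@perm_inj _ g)).
by apply: eq_card => z; rewrite !inE (autE _ _ ga) aut_dist.
Qed.

Lemma pair_trans (T : finType) (e : rel T) i :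
  vertex_transitive e -> stab_transitive_on_sphere e i ->
  forall u v u' v', dist e u v = i -> dist e u' v' = i ->
  exists2 g, g \in Defs.Aut e & (g u = u' /\ g v = v').
Proof.
move=> vt st u v u' v' h1 h2.
have [g ga gu] := vt u u'.
have [h ha [hu hv]] : exists2 h, h \in Defs.Aut e & (h u' = u' /\ h (g v) = v').
  by apply: st; rewrite inE ?h2 // -gu aut_dist // h1.
exists (g * h)%g; first exact: autM.
by rewrite !permM gu hu hv.
Qed.

Unset Implicit Arguments.

Theorem lemma6p3 (T : finType) (e : rel T) (k : nat) :
  simple_graph e -> connected_graph e -> two_distance_transitive e ->
  regular_of_valency e k -> 3 <= k ->
  (distance_transitive e /\ strongly_regular e) \/
  (3 <= diameter e /\
   (forall u w x y : T, e u w -> dist e x y = 2 ->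
      common_nbrs e x y <= b1 e u w /\ k + 1 <= 3 * b1 e u w)).
Proof.
move=> [sym irr] conn [d2 [vt [st1 st2]]] reg k3.
have dle x y : dist e x y <= #|T|.
  rewrite leqNgt; apply/negP => /dist_min; rewrite conn_ball //.
have dtr1 := pair_trans vt st1.
have dtr2 := pair_trans vt st2.
have d1P x y : dist e x y = 1 <-> e x y.
  rewrite distSP // ball1_in ball0_in; split.
    by move=> [/orP[/eqP ->|//]]; rewrite eqxx.
  by move=> h; rewrite h orbT; split => //; apply/eqP => yx; move: h; rewrite yx irr.
have d2P x y : dist e x y = 2 <-> (y \in ball e 2 x /\ y \notin ball e 1 x).
  exact: distSP.
have ddiam x y : dist e x y <= diameter e.
  apply: leq_trans (leq_bigmax x); exact: (leq_bigmax (F := fun y => dist e x y) y).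
have [dgt2 | dle2] := ltnP 2 (diameter e); last first.
  left; split.
    move=> i u v u' v' h1 h2.
    case: i h1 h2 => [|[|[|i]]] h1 h2.
    - have -> := dist0 (dle u v) h1; have -> := dist0 (dle u' v') h2.
      by have [g ga gu] := vt u u'; exists g.
    - exact: dtr1.
    - exact: dtr2.
    - by have := leq_trans (ddiam u v) dle2; rewrite h1.
  have lamP : exists lam, forall x y, e x y -> common_nbrs e x y = lam.
    case: (pickP (fun p : T * T => e p.1 p.2)) => [[a b] /= eab | none].
      exists (common_nbrs e a b) => x y exy.
      have [g ga [gx gy]] := dtr1 a b x y (proj2 (d1P a b) eab) (proj2 (d1P x y) exy).
      by rewrite -gx -gy aut_cn.
    by exists 0 => x y exy; move: (none (x, y)); rewrite /= exy.
  have d2' x y : x != y -> ~~ e x y -> dist e x y = 2.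
    move=> nxy nexy; case E: (dist e x y) => [|[|[|n]]] //.
    - by have yx := dist0 (dle x y) E; rewrite yx eqxx in nxy.
    - by have := proj1 (d1P x y) E; rewrite (negbTE nexy).
    - by have := leq_trans (ddiam x y) dle2; rewrite E.
  have muP : exists mu, forall x y, x != y -> ~~ e x y -> common_nbrs e x y = mu.
    case: (pickP (fun p : T * T => (p.1 != p.2) && ~~ e p.1 p.2)) => [[a b] /= /andP[nab neab] | none].
      exists (common_nbrs e a b) => x y nxy nexy.
      have [g ga [gx gy]] := dtr2 a b x y (d2' a b nab neab) (d2' x y nxy nexy).
      by rewrite -gx -gy aut_cn.
    by exists 0 => x y nxy nexy; move: (none (x, y)); rewrite /= nxy nexy.
  have [lam hl] := lamP; have [mu hm] := muP.
  by exists k, lam, mu.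
right; split => //.
have [x [y hxy]] : exists x y, 2 < dist e x y.
  case: (boolP [exists x, exists y, 2 < dist e x y]) => [/existsP[x /existsP[y h]] | /negP none]; first by exists x, y.
  exfalso; move: dgt2; rewrite ltnNge => /negP; apply.
  apply/bigmax_leqP => x _; apply/bigmax_leqP => y _; rewrite leqNgt; apply/negP => h.
  by apply: none; apply/existsP; exists x; apply/existsP; exists y.
have yn2 := dist_min hxy.
have b32 : ~~ (ball e 3 x \subset ball e 2 x).
  apply/negP => sub.
  have eq32 : ball e 3 x = ball e 2 x by apply/eqP; rewrite eqEsubset sub ballS.
  have := ball_stab eq32 (#|T| - 2); rewrite subnK; last first.
    exact: leq_trans (ltnW hxy) (dle x y).
  by move=> E; have := conn_ball (conn x y); rewrite E (negbTE yn2).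
have [z z3 z2] := subsetPn b32.
move: z3; rewrite ballS_in (negbTE z2) /= => /existsP[y0 /andP[y02 ey0z]].
have y01 : y0 \notin ball e 1 x by apply: contra z2 => h; exact: ball_step h ey0z.
have : y0 \in ball e 1.+1 x := y02; rewrite ballS_in (negbTE y01) /= => /existsP[w /andP[w1 ewy0]].
have exw : e x w.
  move: w1; rewrite ball1_in => /orP[/eqP wx | //].
  exfalso; move/negP: y01; apply; apply: (ball_step (y:=w)) => //.
  by rewrite ball0_in wx.
have dxy0 : dist e x y0 = 2 := proj2 (d2P x y0) (conj y02 y01).
move: (y01); rewrite ball1_in negb_or => /andP[y0x nexy0].
have dwz : dist e w z = 2.
  apply/d2P; split.
    apply: (ball_step (y:=y0)) ey0z; by rewrite ball1_in ewy0 orbT.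
  apply: contra z2 => h; exact: (subsetP (ball_adj 1 exw)) _ h.
pose b := b1 e x w; pose c := common_nbrs e w z.
have hb u v : e u v -> b1 e u v = b.
  move=> euv; have [g ga [gx gw]] := dtr1 x w u v (proj2 (d1P _ _) exw) (proj2 (d1P _ _) euv).
  by rewrite -gx -gw aut_b1.
have hc u v : dist e u v = 2 -> common_nbrs e u v = c.
  move=> duv; have [g ga [gx gw]] := dtr2 w z u v dwz duv.
  by rewrite -gx -gw aut_cn.
have cb : c <= b.
  rewrite /c /b /common_nbrs /b1; apply: subset_leq_card; apply/subsetP => v.
  rewrite !inE => /andP[ewv ezv].
  rewrite ewv /=; apply/eqP/d2P; split.
    by apply: (subsetP (ball_adj 1 exw)); rewrite ball1_in ewv orbT.
  apply: contra z2 => h; apply: ball_step h _; by rewrite sym.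
have inB a v : e w a -> e w v -> v != a -> ~~ e a v ->
    v \in [set t | e w t && (dist e a t == 2)].
  move=> ewa ewv nva nav; rewrite inE ewv /=; apply/eqP/d2P; split.
    have eaw : e a w by rewrite sym.
    by apply: (subsetP (ball_adj 1 eaw)); rewrite ball1_in ewv orbT.
  by rewrite ball1_in negb_or nva.
have ewx : e w x by rewrite sym.
have sub : [set v | e w v] \subset ([set t | e x t && e y0 t] :\ w)
      :|: [set t | e w t && (dist e x t == 2)] :|: [set t | e w t && (dist e y0 t == 2)].
  apply/subsetP => v; rewrite inE => ewv.
  case: (boolP (e x v && e y0 v)) => [cv | ].
    rewrite !in_setU; apply/orP; left; apply/orP; left.
    rewrite in_setD1 inE cv andbT; apply/eqP => vw; by rewrite vw irr in ewv.
  rewrite negb_and => /orP[nxv | nyv].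
    case: (eqVneq v x) => [-> | vx].
      apply/setUP; right; apply: inB => //; first by rewrite eq_sym.
      by rewrite sym.
    by apply/setUP; left; apply/setUP; right; apply: inB.
  case: (eqVneq v y0) => [-> | vy].
    by apply/setUP; left; apply/setUP; right; apply: inB.
  by apply/setUP; right; apply: inB.
have ey0w : e y0 w by rewrite sym.
have hB : #|[set t | e w t && (dist e x t == 2)]| = b by [].
have hC : #|[set t | e w t && (dist e y0 t == 2)]| = b by exact: (hb y0 w ey0w).
have c1 : #|[set t | e x t && e y0 t]| = c by exact: (hc x y0 dxy0).
have wc : w \in [set t | e x t && e y0 t] by rewrite inE exw ey0w.
have hD := cardsD1 w [set t | e x t && e y0 t]; rewrite wc c1 in hD.
have K := subset_leq_card sub; rewrite (reg w) in K.
have U1 := cardU_le (([set t | e x t && e y0 t] :\ w) :|: [set t | e w t && (dist e x t == 2)]) [set t | e w t && (dist e y0 t == 2)].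
have U2 := cardU_le ([set t | e x t && e y0 t] :\ w) [set t | e w t && (dist e x t == 2)].
rewrite hC in U1; rewrite hB in U2.
have kb : k + 1 <= 3 * b.
  clearbody b c; clear -K U1 U2 hD cb; move: K U1 U2 hD cb.
  set A := #|_ :\ w|; set B := #|_ :|: _|; set C := #|_ :|: _|; simpl nat_of_bool; lia.
move=> u v x' y' euv dxy; rewrite (hb u v euv) (hc x' y' dxy); split => //.
Qed.
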